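(* For sufficiently large $m$, let $G=\mathbb{Z}_2^m\times\mathbb{Z}_4$. Let $t$ be an integer with $3\leq t\leq 0.001f(G)$ and $|I(G)|+2t\equiv 0\pmod 3$, and let $M$ be the multiset consisting of $f(G)-t$ copies of $2$ and $\frac13(|I(G)|+2t)$ copies of $3$. Then $G\setminus\{0\}$ has a zero-sum $M$-partition.
   Context: $I(G)$ is the set of elements of order $2$ in $G$, and $f(G)=(|G|-|I(G)|-1)/2$. A zero-sum $M$-partition of a set $S\subseteq G$ is a partition of $S$ into sets each summing to $0$, such that the multiset of part sizes equals $M$. *)

(* Defs.v *)
From HB Require Import structures.
From mathcomp Require Import all_boot all_order all_algebra.
Set Implicit Arguments. Unset Strict Implicit. Unset Printing Implicit Defensive.
Import GRing.Theory.
Local Open Scope ring_scope.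

Definition invols (G : finZmodType) : {set G} :=
  [set x : G | (x != 0) && (x + x == 0)].

(* f(G) = (|G| - |I(G)| - 1)/2; the numerator is always even. *)
Definition fG (G : finZmodType) : nat :=
  ((#|G| - #|invols G| - 1) %/ 2)%N.

(* A zero-sum M-partition of S: a partition of S into (nonempty) blocks,
   each summing to 0, whose multiset of block sizes is M (given as a seq,
   compared up to permutation). *)
Definition zero_sum_partition (G : finZmodType) (S : {set G}) (M : seq nat) :=
  exists P : {set {set G}},
    [/\ partition P S,
        (forall B, B \in P -> \sum_(x in B) x = 0) &
        perm_eq (map (fun B : {set G} => #|B|) (enum P)) M].

Definition Gm (m : nat) := ('rV['Z_2]_m * 'Z_4)%type.
HB.instance Definition _ m := GRing.Zmodule.on (Gm m).
HB.instance Definition _ m := Finite.on (Gm m).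

(* Main.v *)
From HB Require Import structures.
Require Import Defs.
From mathcomp Require Import all_boot all_order all_algebra zify.
Set Implicit Arguments. Unset Strict Implicit. Unset Printing Implicit Defensive.
Import GRing.Theory.

Local Open Scope ring_scope.

Lemma filter_pred1_nseq (T : eqType) (x : T) (s : seq T) :
  [seq y <- s | pred1 x y] = nseq (count_mem x s) x.
Proof.
elim: s => //= y s IH; case: eqP => [->|]; rewrite ?eqxx /= IH //.
Qed.

Lemma count_enum_card (T : finType) (A : {set T}) (p : pred T) :
  count p (enum A) = #|[set x in A | p x]|.
Proof.
rewrite -sum1_count big_enum_cond /= -sum1_card.
by apply: eq_bigl => x; rewrite inE.
Qed.

Section Orbits.
Variable X : finZmodType.
Variable S : {set X}.
Variable pi : X -> X.
Hypothesis piS : forall x, x \in S -> pi x \in S.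
Hypothesis piN : forall x, x \in S -> pi x != x.
Hypothesis piC : forall x, x \in S ->
  (pi (pi x) = x /\ x + pi x = 0) \/
  (pi (pi (pi x)) = x /\ pi (pi x) != x /\ x + pi x + pi (pi x) = 0).

Definition orb (x : X) : {set X} := x |: (pi x |: [set pi (pi x)]).

Lemma orb_self x : x \in orb x.
Proof. by rewrite !inE eqxx. Qed.

Lemma orbS x : x \in S -> orb x \subset S.
Proof.
move=> xS; apply/subsetP => y; rewrite !inE => /or3P [] /eqP ->; rewrite ?piS //.
Qed.

Lemma orb_pi x : x \in S -> orb (pi x) = orb x.
Proof.
move=> xS; case: (piC xS) => [[h2 _]|[h3 _]]; apply/setP => y; rewrite !inE ?h2 ?h3;
  by do !case: (_ == _).
Qed.

Lemma orb_eq x y : x \in S -> y \in orb x -> orb y = orb x.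
Proof.
move=> xS; rewrite !inE => /or3P [] /eqP ->; first by [].
  by rewrite orb_pi.
by rewrite orb_pi ?piS // orb_pi.
Qed.

Definition Porb := [set orb x | x in S].

Lemma Porb_partition : partition Porb S.
Proof.
apply/and3P; split.
- apply/eqP/setP => y; apply/bigcupP/idP.
    by case=> B /imsetP [x xS ->] yB; apply: (subsetP (orbS xS)).
  by move=> yS; exists (orb y); [apply: imset_f | apply: orb_self].
- apply/trivIsetP => A B /imsetP [x xS ->] /imsetP [y yS ->] neq.
  apply/pred0P => z /=; apply/negbTE/negP => /andP [zx zy].
  by move: neq; rewrite -(orb_eq xS zx) -(orb_eq yS zy) eqxx.
- apply/imsetP => [[x xS]] /setP /(_ x); by rewrite orb_self inE.
Qed.

Lemma orb_card x : x \in S ->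
  (#|orb x| = 2)%N /\ pi (pi x) = x \/ (#|orb x| = 3)%N /\ pi (pi x) != x.
Proof.
move=> xS; have n1 := piN xS; have n2 := piN (piS xS).
case: (piC xS) => [[h2 _]|[h3 [h4 _]]].
  left; split=> //.
  have -> : orb x = x |: [set pi x].
    by apply/setP => y; rewrite !inE h2; do !case: (_ == _).
  by rewrite cardsU1 cards1 inE eq_sym n1.
right; split=> //; rewrite /orb cardsU1 cardsU1 cards1 !inE.
rewrite negb_or.
by rewrite eq_sym n1 /= eq_sym h4 eq_sym n2.
Qed.

Lemma orb_sum x : x \in S -> \sum_(y in orb x) y = 0.
Proof.
move=> xS; have n1 := piN xS; have n2 := piN (piS xS).
case: (piC xS) => [[h2 hs]|[h3 [h4 hs]]].
  have -> : orb x = x |: [set pi x].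
    by apply/setP => y; rewrite !inE h2; do !case: (_ == _).
  by rewrite big_setU1 ?big_set1 // inE eq_sym.
rewrite /orb big_setU1 ?big_setU1 ?big_set1 ?inE //=.
  by rewrite addrA.
  by rewrite eq_sym.
by rewrite negb_or eq_sym n1 eq_sym h4.
Qed.

Lemma orbit_zsp (a b : nat) :
  #|[set x in S | pi (pi x) == x]| = (2 * a)%N ->
  #|S| = (2 * a + 3 * b)%N ->
  zero_sum_partition S (nseq a 2%N ++ nseq b 3%N).
Proof.
move=> c2 cS; exists Porb; split; first exact: Porb_partition.
  by move=> B /imsetP [x xS ->]; apply: orb_sum.
set P2 := [set B in Porb | #|B| == 2%N].
set P3 := [set B in Porb | #|B| == 3%N].
have sizes : forall B, B \in Porb -> (#|B| == 2%N) || (#|B| == 3%N).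
  by move=> B /imsetP [x xS ->]; case: (orb_card xS) => [[->]|[->]].
have trP := Porb_partition; move/and3P: (trP) => [/eqP covP trivP nP].
have partP2 : partition P2 [set x in S | pi (pi x) == x].
  apply/and3P; split.
  - apply/eqP/setP => y; rewrite inE; apply/bigcupP/idP.
      case=> B; rewrite inE => /andP [/imsetP [x xS ->]] cB yB.
      have yS : y \in S by apply: (subsetP (orbS xS)).
      rewrite yS /=; move: cB; rewrite -(orb_eq xS yB).
      by case: (orb_card yS) => [[-> ->]|[-> _]] //.
    move=> /andP [yS yy]; exists (orb y); last exact: orb_self.
    rewrite inE imset_f //=; case: (orb_card yS) => [[-> _]|[_ h]] //.
    by rewrite (eqP yy) eqxx in h.
  - by apply: trivIsetS trivP; apply/subsetP => B; rewrite inE => /andP [].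
  - by rewrite inE negb_and nP.
have partP3 : partition P3 [set x in S | pi (pi x) != x].
  apply/and3P; split.
  - apply/eqP/setP => y; rewrite inE; apply/bigcupP/idP.
      case=> B; rewrite inE => /andP [/imsetP [x xS ->]] cB yB.
      have yS : y \in S by apply: (subsetP (orbS xS)).
      rewrite yS /=; move: cB; rewrite -(orb_eq xS yB).
      by case: (orb_card yS) => [[-> ->]|[-> h]] //; rewrite eqxx.
    move=> /andP [yS yy]; exists (orb y); last exact: orb_self.
    rewrite inE imset_f //=; case: (orb_card yS) => [[_ h]|[-> _]] //.
    by rewrite h eqxx in yy.
  - by apply: trivIsetS trivP; apply/subsetP => B; rewrite inE => /andP [].
  - by rewrite inE negb_and nP.
have c2' := card_uniform_partition (n := 2%N) _ partP2.
rewrite c2 in c2'; have {}c2' : #|P2| = a.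
  have: (2 * a = #|P2| * 2)%N by apply: c2' => B; rewrite inE => /andP [_ /eqP].
  by rewrite mulnC => /eqP; rewrite eqn_mul2r /= => /eqP.
have c3' := card_uniform_partition (n := 3%N) _ partP3.
have {}c3' : #|P3| = b.
  have: (#|[set x in S | pi (pi x) != x]| = #|P3| * 3)%N.
    by apply: c3' => B; rewrite inE => /andP [_ /eqP].
  have -> : #|[set x in S | pi (pi x) != x]| = (3 * b)%N.
    have := cardsID [set x | pi (pi x) == x] S.
    have -> : S :&: [set x | pi (pi x) == x] = [set x in S | pi (pi x) == x].
      by apply/setP => x; rewrite !inE.
    have -> : S :\: [set x | pi (pi x) == x] = [set x in S | pi (pi x) != x].
      by apply/setP => x; rewrite !inE andbC.
    by rewrite c2 cS => /eqP; rewrite eqn_add2l => /eqP.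
  by rewrite mulnC => /eqP; rewrite eqn_mul2r /= => /eqP.
set s := map _ _.
have allS : all (fun k => (k == 2%N) || (k == 3%N)) s.
  by apply/allP => k /mapP [B]; rewrite mem_enum => /sizes h ->.
rewrite -(perm_filterC (pred1 2%N) s).
apply: perm_cat.
  have -> : [seq x <- s | pred1 2%N x] = nseq (count_mem 2%N s) 2%N.
    exact: filter_pred1_nseq.
  rewrite /s count_map count_enum_card.
  have -> : [set x in Porb | preim (fun B : {set X} => #|B|) (pred1 2%N) x] = P2.
    by apply/setP => B; rewrite !inE.
  by rewrite c2'.
have -> : [seq x <- s | predC (pred1 2%N) x] = filter (pred1 3%N) s.
  apply: eq_in_filter => k /(allP allS) /=; by case/orP => /eqP ->.
have -> : [seq x <- s | pred1 3%N x] = nseq (count_mem 3%N s) 3%N.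
  exact: filter_pred1_nseq.
rewrite /s count_map count_enum_card.
have -> : [set x in Porb | preim (fun B : {set X} => #|B|) (pred1 3%N) x] = P3.
  by apply/setP => B; rewrite !inE.
by rewrite c3'.
Qed.
End Orbits.

Lemma transport (X Y : finZmodType) (f : X -> Y) (g : Y -> X)
  (fD : forall x y, f (x + y) = f x + f y) (fK : cancel f g) (gK : cancel g f)
  (pi : X -> X) (a b : nat) :
  (forall x, x != 0 -> pi x != 0) ->
  (forall x, x != 0 -> pi x != x) ->
  (forall x, x != 0 ->
    (pi (pi x) = x /\ x + pi x = 0) \/
    (pi (pi (pi x)) = x /\ pi (pi x) != x /\ x + pi x + pi (pi x) = 0)) ->
  #|[set x | (x != 0) && (pi (pi x) == x)]| = (2 * a)%N ->
  #|X| = (2 * a + 3 * b).+1%N ->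
  zero_sum_partition (~: [set 0] : {set Y}) (nseq a 2%N ++ nseq b 3%N).
Proof.
move=> hS hN hC c2 cX.
have f0 : f 0 = 0.
  have h := fD 0 0; rewrite addr0 in h.
  by apply: (addrI (f 0)); rewrite -h addr0.
have g0 : forall y, (g y == 0) = (y == 0).
  move=> y; apply/eqP/eqP => [h|->]; last by rewrite -f0 fK.
  by rewrite -[y]gK h f0.
have f0' : forall x, (f x == 0) = (x == 0) by move=> x; rewrite -g0 fK.
pose pY := fun y => f (pi (g y)).
have inS : forall y, (y \in ~: [set 0 : Y]) = (g y != 0).
  by move=> y; rewrite !inE g0.
apply: (@orbit_zsp _ _ pY).
- move=> y; rewrite !inE /pY f0' -g0 => h; exact: hS.
- move=> y; rewrite !inE /pY -g0 => h; apply/eqP => e.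
  by move/eqP: (hN _ h); apply; rewrite -[LHS]fK e.
- move=> y; rewrite !inE -g0 => /hC [[h1 h2]|[h1 [h2 h3]]].
    left; rewrite /pY !fK h1 gK; split=> //.
    by rewrite -{1}[y]gK -fD h2 f0.
  right; rewrite /pY !fK h1 gK; split=> //; split.
    by apply/eqP => e; move/eqP: h2; apply; rewrite -[LHS]fK e.
  by rewrite -{1}[y]gK -!fD h3 f0.
- rewrite -c2 -(card_imset _ (can_inj fK)) (can2_imset_pre _ fK gK).
  apply: eq_card => y; rewrite !inE /pY -g0 fK.
  congr (_ && _); apply/eqP/eqP => e; first by rewrite -[LHS]fK e.
  by rewrite e gK.
- rewrite (cardsC1 (0 : Y)).
  have -> : #|Y| = #|X|.
    rewrite -cardsT -[RHS]cardsT -(card_imset _ (can_inj fK)) (can2_imset_pre _ fK gK).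
    by apply: eq_card => y; rewrite !inE.
  by rewrite cX.
Qed.

Definition prodZ (Q U : finZmodType) := (Q * U)%type.
HB.instance Definition _ Q U := GRing.Zmodule.on (prodZ Q U).
HB.instance Definition _ Q U := Finite.on (prodZ Q U).

Section Construction.
Variables (Q U : finZmodType).
Hypothesis U2 : forall u : U, u + u = 0.
Variable w : U -> U.
Hypothesis wD : forall u v, w (u + v) = w u + w v.
Hypothesis w3 : forall u, w (w (w u)) = u.
Hypothesis wfix : forall u, w u = u -> u = 0.
Variable Gam : {set U}.
Hypothesis G0 : 0 \notin Gam.
Hypothesis Gw : forall u, (w u \in Gam) = (u \in Gam).
Variable N : U -> Q -> Q.
Hypothesis N0 : forall u, N u 0 = 0.
Hypothesis Ninv : forall u q, u != 0 -> q + q = 0 -> N u q + N u q = 0.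
Hypothesis N3 : forall u q, u != 0 -> q + q = 0 -> N (w (w u)) (N (w u) (N u q)) = q.
Hypothesis Nsum : forall u q, u != 0 -> q + q = 0 -> q + N u q + N (w u) (N u q) = 0.
Variable o : Q.
Hypothesis o2 : o + o != 0.
Variable pQ : Q -> Q.
Hypothesis pQS : forall q, q != 0 -> pQ q != 0.
Hypothesis pQN : forall q, q != 0 -> pQ q != q.
Hypothesis pQC : forall q, q != 0 ->
    (pQ (pQ q) = q /\ q + pQ q = 0) \/
    (pQ (pQ (pQ q)) = q /\ pQ (pQ q) != q /\ q + pQ q + pQ (pQ q) = 0).

Lemma w0 : w 0 = 0.
Proof. by have := wD 0 0; rewrite addr0 => h; apply: (addrI (w 0)); rewrite -h addr0. Qed.
Lemma wN0 u : u != 0 -> w u != 0.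
Proof. by move=> h; apply/eqP => e; move/eqP: h; apply; rewrite -(w3 u) e !w0. Qed.
Lemma w1 u : u != 0 -> w u != u.
Proof. by move=> h; apply/eqP => /wfix; apply/eqP. Qed.
Lemma w2 u : u != 0 -> w (w u) != u.
Proof.
move=> h; apply/eqP => e; have: w u = u by rewrite -{2}(w3 u) e.
by move/wfix; apply/eqP.
Qed.
Lemma wsum u : u + w u + w (w u) = 0.
Proof.
by apply: wfix; rewrite !wD w3 [LHS]addrC [LHS]addrA.
Qed.
Lemma Gw2 u : (w (w u) \in Gam) = (u \in Gam).
Proof. by rewrite !Gw. Qed.

Lemma on2 : o != 0.
Proof. by apply: contraNneq o2 => ->; rewrite addr0. Qed.
Lemma no2 : - o + - o != 0.
Proof. by rewrite -opprD oppr_eq0. Qed.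
Lemma o_no : o != - o.
Proof. by apply: contraNneq o2 => e; rewrite {1}e addNr. Qed.

Definition gad (q : Q) := if q == 0 then o else if q == o then - o else 0.
Definition isg (q : Q) := [|| q == 0, q == o | q == - o].

Lemma of1 : (o == 0) = false. Proof. exact: negPf on2. Qed.
Lemma of2 : (0 == o) = false. Proof. by rewrite eq_sym of1. Qed.
Lemma of3 : (- o == 0) = false. Proof. by rewrite oppr_eq0 of1. Qed.
Lemma of4 : (0 == - o) = false. Proof. by rewrite eq_sym of3. Qed.
Lemma of5 : (o == - o) = false. Proof. exact: negPf o_no. Qed.
Lemma of6 : (- o == o) = false. Proof. by rewrite eq_sym of5. Qed.

Ltac osimp := rewrite /gad ?eqxx ?of1 ?of2 ?of3 ?of4 ?of5 ?of6 /=;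
  rewrite ?eqxx ?of1 ?of2 ?of3 ?of4 ?of5 ?of6 /=; rewrite ?eqxx ?of1 ?of2 ?of3 ?of4 ?of5 ?of6 /=.

Lemma gad_isg q : isg q -> isg (gad q).
Proof. by rewrite /isg => /or3P [] /eqP ->; osimp; rewrite ?orbT. Qed.

Lemma gad3 q : isg q -> gad (gad (gad q)) = q.
Proof. by rewrite /isg => /or3P [] /eqP ->; osimp. Qed.

Lemma gad2 q : isg q -> gad (gad q) != q.
Proof. by rewrite /isg => /or3P [] /eqP ->; osimp. Qed.

Lemma gad_sum q : isg q -> q + gad q + gad (gad q) = 0.
Proof.
rewrite /isg => /or3P [] /eqP ->; osimp.
- by rewrite add0r subrr.
- by rewrite addrN add0r.
- by rewrite addr0 addNr.
Qed.

Definition piX (x : Q * U) : Q * U :=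
  let: (q, u) := x in
  if u == 0 then (pQ q, 0)
  else if (u \in Gam) && isg q then (gad q, w u)
  else if q + q == 0 then (N u q, w u)
  else (- q, u).

Arguments piX : simpl never.

Lemma pair_eq0 (q : Q) (u : U) : ((q, u) == 0 :> Q * U) = (q == 0) && (u == 0).
Proof. by []. Qed.

Lemma piX_add (q1 q2 : Q) (u1 u2 : U) : (q1, u1) + (q2, u2) = (q1 + q2, u1 + u2) :> Q * U.
Proof. by []. Qed.

Lemma isg_inv q : isg q -> q + q = 0 -> q = 0.
Proof.
have h1 := o2; have h2 := no2.
by rewrite /isg => /or3P [] /eqP -> // /eqP; rewrite ?(negPf h1) ?(negPf h2).
Qed.

Lemma piA q u : u != 0 -> u \in Gam -> isg q -> piX (q, u) = (gad q, w u).
Proof. by move=> /negPf h g i; rewrite /piX h g i. Qed.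
Lemma piB q u : u != 0 -> ~~ ((u \in Gam) && isg q) -> q + q = 0 -> piX (q, u) = (N u q, w u).
Proof. by move=> /negPf h /negPf g i; rewrite /piX h g i eqxx. Qed.
Lemma piCc q u : u != 0 -> ~~ ((u \in Gam) && isg q) -> q + q != 0 -> piX (q, u) = (- q, u).
Proof. by move=> /negPf h /negPf g /negPf i; rewrite /piX h g i. Qed.
Lemma pi0 q : piX (q, 0) = (pQ q, 0).
Proof. by rewrite /piX eqxx. Qed.

Lemma isgN q : isg (- q) = isg q.
Proof.
rewrite /isg oppr_eq0 eqr_opp eqr_oppLR.
by case: (q == 0); case: (q == o); case: (q == -o).
Qed.

Lemma NB q u : u != 0 -> ~~ ((u \in Gam) && isg q) -> q + q = 0 ->
  ~~ ((w u \in Gam) && isg (N u q)).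
Proof.
move=> u0 ng qq; rewrite Gw; apply/negP => /andP [uG iN].
have e := isg_inv iN (Ninv u0 qq).
have : q = 0 by rewrite -(N3 u0 qq) e !N0.
by move=> q0; move: ng; rewrite uG q0 /isg eqxx.
Qed.

Lemma piX_S x : x != 0 -> piX x != 0.
Proof.
case: x => q u; rewrite !pair_eq0.
have [->|u0] := eqVneq u 0; rewrite ?eqxx ?andbT /=.
  by move=> /pQS; rewrite /piX eqxx pair_eq0 eqxx andbT.
move=> _; rewrite /piX (negPf u0).
case: ifP => _; first by rewrite pair_eq0 (negPf (wN0 u0)) andbF.
case: ifP => _; first by rewrite pair_eq0 (negPf (wN0 u0)) andbF.
by rewrite pair_eq0 (negPf u0) andbF.
Qed.

Lemma piX_N x : x != 0 -> piX x != x.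
Proof.
case: x => q u; rewrite !pair_eq0.
have [->|u0] := eqVneq u 0; rewrite ?eqxx ?andbT /=.
  by move=> /pQN h; rewrite /piX eqxx xpair_eqE negb_and h.
move=> _; rewrite /piX (negPf u0); case: ifP => _; first by rewrite xpair_eqE (negPf (w1 u0)) andbF.
case: ifP => h; first by rewrite xpair_eqE (negPf (w1 u0)) andbF.
rewrite xpair_eqE eqxx andbT; apply: contraFN h => /eqP e.
by rewrite -{1}e addNr.
Qed.

Lemma piX_C x : x != 0 ->
    (piX (piX x) = x /\ x + piX x = 0) \/
    (piX (piX (piX x)) = x /\ piX (piX x) != x /\ x + piX x + piX (piX x) = 0).
Proof.
case: x => q u; rewrite !pair_eq0.
have [->|u0] := eqVneq u 0; rewrite ?eqxx ?andbT.
  move=> q0; have e : forall r, piX (r, 0) = (pQ r, 0) by move=> r; rewrite pi0.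
  rewrite !e !piX_add !addr0.
  case: (pQC q0) => [[h1 h2]|[h1 [h2 h3]]]; [left|right].
    by rewrite h1 h2.
  by rewrite h1 h3 xpair_eqE eqxx andbT h2.
move=> _; have wu0 := wN0 u0; have wwu0 := wN0 wu0.
have [hg|hg] := boolP ((u \in Gam) && isg q).
  right; case/andP: hg => uG iq.
  rewrite piA // piA ?Gw ?gad_isg // piA ?Gw2 ?gad_isg // w3 gad3 //.
  rewrite !piX_add xpair_eqE (negPf (w2 u0)) andbF gad_sum // wsum; by [].
have [qq|qq] := eqVneq (q + q) 0.
  right; have nb := NB u0 hg qq.
  have qq2 := Ninv u0 qq; have nb2 := NB wu0 nb qq2.
  rewrite piB // piB // piB //; last exact: Ninv.
  rewrite w3 N3 // !piX_add xpair_eqE (negPf (w2 u0)) andbF Nsum // wsum; by [].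
left; rewrite piCc // piCc ?opprK //; last by rewrite -opprD oppr_eq0.
  by rewrite piX_add addrN U2.
by rewrite isgN.
Qed.

Definition Q2 := [set q | (q != 0) && (pQ (pQ q) == q)].
Definition O4 := [set q : Q | q + q != 0].

Lemma piX_count :
  #|[set x : Q * U | (x != 0) && (piX (piX x) == x)]| =
  (#|Q2| + (#|O4| * #|U|.-1 - 2 * #|Gam|))%N.
Proof.
have -> : [set x : Q * U | (x != 0) && (piX (piX x) == x)] =
   setX Q2 [set 0] :|: (setX O4 (~: [set 0]) :\: setX [set o; - o] Gam).
  apply/setP => [[q u]]; rewrite !inE pair_eq0.
  have [->|u0] := eqVneq u 0.
    have e : forall r, piX (r, 0) = (pQ r, 0) by move=> r; rewrite pi0.
    by rewrite !e xpair_eqE !eqxx !andbT /= !andbF orbF.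
  have wu0 := wN0 u0; have wwu0 := wN0 wu0.
  rewrite /= !andbF /= andbT.
  have [hg|hg] := boolP ((u \in Gam) && isg q).
    case/andP: hg => uG iq.
    rewrite piA // piA ?Gw ?gad_isg // xpair_eqE (negPf (w2 u0)) andbF uG andbT.
    case/or3P: iq => /eqP ->; rewrite ?eqxx ?orbT ?andbF //.
    by rewrite addr0 eqxx andbF.
  have [qq|qq] := eqVneq (q + q) 0.
    have nb := NB u0 hg qq; have qq2 := Ninv u0 qq.
    by rewrite piB // piB // xpair_eqE (negPf (w2 u0)) !andbF.
  have nq : - q + - q != 0 by rewrite -opprD oppr_eq0.
  have nh : ~~ ((u \in Gam) && isg (- q)) by rewrite isgN.
  rewrite piCc // piCc // opprK eqxx.
  move: hg; rewrite /isg andbT.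
  by case: (u \in Gam); case: (q == 0); case: (q == o); case: (q == -o).
rewrite cardsU.
have -> : setX Q2 [set 0] :&: (setX O4 (~: [set 0]) :\: setX [set o; - o] Gam) = set0.
  apply/setP => [[q u]]; rewrite !inE.
  by case: (u == 0); rewrite ?andbF.
rewrite cards0 subn0 cardsX cards1 muln1 cardsD.
have -> : setX O4 (~: [set 0]) :&: setX [set o; - o] Gam = setX [set o; - o] Gam.
  apply/setIidPr/subsetP => [[q u]]; rewrite !inE => /andP [qo uG].
  rewrite (_ : u != 0); last by apply: contraNneq G0 => <-.
  by case/orP: qo => /eqP ->; rewrite ?o2 ?no2.
by rewrite !cardsX cards2 o_no (cardsC1 (0 : U)).
Qed.

Lemma construction_zsp (Y : finZmodType) (f : prodZ Q U -> Y) (g : Y -> prodZ Q U)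
  (fD : forall x y, f (x + y) = f x + f y) (fK : cancel f g) (gK : cancel g f)
  (a b : nat) :
  (#|Q2| + (#|O4| * #|U|.-1 - 2 * #|Gam|))%N = (2 * a)%N ->
  (#|Q| * #|U|)%N = (2 * a + 3 * b).+1%N ->
  zero_sum_partition (~: [set 0] : {set Y}) (nseq a 2%N ++ nseq b 3%N).
Proof.
move=> c2 cX; apply: (@transport (prodZ Q U) Y f g fD fK gK piX).
- exact: piX_S.
- exact: piX_N.
- exact: piX_C.
- by rewrite piX_count.
- by rewrite card_prod.
Qed.

End Construction.

Local Close Scope ring_scope.

Section Orb3.
Variable T : finType.
Variable w : T -> T.
Variable z : T.
Hypothesis w3 : forall u, w (w (w u)) = u.
Hypothesis wz : w z = z.
Hypothesis wfp : forall u, u != z -> w u != u.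

Lemma wnz u : u != z -> w u != z.
Proof. by move=> h; apply: contraNneq h => e; rewrite -(w3 u) e !wz. Qed.
Lemma w2n u : u != z -> w (w u) != u.
Proof.
move=> h; apply/eqP => e; move/eqP: (wfp h); apply.
by rewrite -{2}(w3 u) e.
Qed.

Definition orb3 u : {set T} := u |: (w u |: [set w (w u)]).

Lemma orb3w u : orb3 (w u) = orb3 u.
Proof. by apply/setP => v; rewrite !inE w3; do !case: (_ == _). Qed.

Lemma label_exists : exists c : T -> nat,
  forall u, (c u < 3)%N /\ (u != z -> c (w u) = (c u).+1 %% 3)%N.
Proof.
pose rep u := odflt z [pick v in orb3 u].
have repw u : rep (w u) = rep u by rewrite /rep orb3w.
have repin u : rep u \in orb3 u.
  rewrite /rep; case: pickP => [v|] //= h.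
  by move: (h u); rewrite !inE eqxx.
exists (fun u => if u == rep u then 0%N else if u == w (rep u) then 1%N else 2%N).
move=> u; split; first by do !case: ifP.
move=> uz; rewrite repw; have := repin u; rewrite !inE.
have n1 := wfp uz; have n2 := w2n uz; have wuz := wnz uz.
have n3 := wfp wuz.
have e1 : (w u == w (w u)) = false by rewrite eq_sym (negPf n3).
have e2 : (w u == u) = false by rewrite (negPf n1).
have e3 : (u == w (w u)) = false by rewrite eq_sym (negPf n2).
have e4 : (u == w u) = false by rewrite eq_sym (negPf n1).
case/or3P => /eqP ->; rewrite ?w3 ?eqxx ?e1 ?e2 ?e3 ?e4 //.
Qed.

Lemma gamma_exists (s : nat) : (3 * s < #|T|)%N ->
  exists G : {set T}, [/\ z \notin G, (forall u, (w u \in G) = (u \in G)) & #|G| = (3 * s)%N].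
Proof.
elim: s => [|s IH] hs.
  by exists set0; split => [|u|]; rewrite ?inE ?cards0 ?muln0.
have [G [zG GI cG]] : exists G : {set T}, [/\ z \notin G, (forall u, (w u \in G) = (u \in G)) & #|G| = (3 * s)%N].
  by apply: IH; lia.
have : #|z |: G| < #|T|.
  by rewrite cardsU1 zG cG add1n; lia.
move=> hlt.
have [x] : exists x, x \notin z |: G.
  apply/existsP; rewrite -negb_forall; apply/negP => /forallP h.
  have : z |: G = [set: T] by apply/setP => y; rewrite in_setT; exact: h y.
  by move=> e; move: hlt; rewrite e cardsT ltnn.
rewrite !inE negb_or => /andP [xz xG].
exists (G :|: orb3 x); split.
- rewrite !inE !negb_or zG /= eq_sym xz /=.
  by rewrite eq_sym (wnz xz) eq_sym (wnz (wnz xz)).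
- have winj : injective w by apply: (can_inj (g := fun y => w (w y))).
  move=> u; rewrite !inE GI -{1}(w3 x) !(inj_eq winj).
  by do !case: (_ == _).
- rewrite cardsU.
  have -> : G :&: orb3 x = set0.
    apply/setP => y; rewrite !inE; apply/negP => /andP [yG].
    case/or3P => /eqP e; move: yG; rewrite e ?GI ?GI; by apply/negP.
  rewrite cards0 subn0 cG cardsU1 cardsU1 cards1 !inE.
  have e1 : (x == w x) = false by rewrite eq_sym (negPf (wfp xz)).
  have e2 : (x == w (w x)) = false by rewrite eq_sym (negPf (w2n xz)).
  have e3 : (w x != w (w x)) by rewrite eq_sym (wfp (wnz xz)).
  by rewrite e1 e2 e3 /=; lia.
Qed.
End Orb3.

Local Open Scope ring_scope.

Lemma Z2 (x : 'Z_2) : x + x = 0.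
Proof. by case: x => [[|[|?]] ?] //; apply/val_inj. Qed.

Lemma rV2 n (x : 'rV['Z_2]_n) : x + x = 0.
Proof. by apply/matrixP => i j; rewrite !mxE Z2. Qed.

Definition UU n := prodZ 'rV['Z_2]_n 'rV['Z_2]_n.
Definition wU n (x : UU n) : UU n := (x.2, x.1 + x.2).

Lemma pairD (A B : finZmodType) (a c : A) (b d : B) :
  (a, b) + (c, d) = (a + c, b + d) :> prodZ A B.
Proof. by []. Qed.

Lemma pair0 (A B : finZmodType) : 0 = (0, 0) :> prodZ A B.
Proof. by []. Qed.

Lemma UU2 n (u : UU n) : u + u = 0.
Proof. by case: u => a b; rewrite pairD !rV2. Qed.

Lemma wUD n (u v : UU n) : wU (u + v) = wU u + wU v.
Proof. case: u v => [a b] [c d]; rewrite /wU pairD /= pairD; congr (_, _). by rewrite addrACA. Qed.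

Lemma wU3 n (u : UU n) : wU (wU (wU u)) = u.
Proof.
case: u => a b; rewrite /wU /=; congr (_, _).
  by rewrite addrC -addrA rV2 addr0.
by rewrite addrCA rV2 addr0.
Qed.

Lemma wUfix n (u : UU n) : wU u = u -> u = 0.
Proof.
case: u => a b; rewrite /wU /= => [[e1 e2]].
move: e2; rewrite e1 => /eqP; rewrite -subr_eq0 addrK => /eqP a0.
by rewrite pair0 a0.
Qed.

Lemma card_UU n : #|{: UU n}| = (4 ^ n)%N.
Proof.
rewrite /UU /prodZ card_prod card_mx card_ord.
by rewrite mul1n -expnMn.
Qed.

Definition Q1 := prodZ 'Z_2 'Z_4.
Definition mk1 (a b : nat) : Q1 := (inZp a, inZp b).
Definition pQ1 (q : Q1) : Q1 :=
  match (val q.1, val q.2) with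
  | (0%N, 1%N) => mk1 0 3 | (0%N, 3%N) => mk1 0 1
  | (1%N, 1%N) => mk1 1 3 | (1%N, 3%N) => mk1 1 1
  | (1%N, 0%N) => mk1 0 2 | (0%N, 2%N) => mk1 1 2 | (1%N, 2%N) => mk1 1 0
  | _ => q end.
Definition N1 (q : Q1) : Q1 := if q == 0 then 0 else pQ1 q.
Definition o1 : Q1 := mk1 0 1.

Ltac bf1 := case=> [[[|[|?]] ?] [[|[|[|[|?]]]] ?]] //.

Lemma pQ1S q : q != 0 -> pQ1 q != 0.
Proof. move: q; bf1. Qed.
Lemma pQ1N q : q != 0 -> pQ1 q != q.
Proof. move: q; bf1. Qed.
Lemma pQ1Cb q : q != 0 ->
  ((pQ1 (pQ1 q) == q) && (q + pQ1 q == 0)) ||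
  [&& pQ1 (pQ1 (pQ1 q)) == q, pQ1 (pQ1 q) != q & q + pQ1 q + pQ1 (pQ1 q) == 0].
Proof. move: q; bf1. Qed.
Lemma pQ1C q : q != 0 ->
    (pQ1 (pQ1 q) = q /\ q + pQ1 q = 0) \/
    (pQ1 (pQ1 (pQ1 q)) = q /\ pQ1 (pQ1 q) != q /\ q + pQ1 q + pQ1 (pQ1 q) = 0).
Proof.
move/pQ1Cb => /orP [/andP [/eqP -> /eqP ->]|/and3P [/eqP -> -> /eqP ->]]; by [left|right].
Qed.
Lemma N1invb q : q + q == 0 -> N1 q + N1 q == 0.
Proof. move: q; bf1. Qed.
Lemma N13b q : q + q == 0 -> N1 (N1 (N1 q)) == q.
Proof. move: q; bf1. Qed.
Lemma N1sumb q : q + q == 0 -> q + N1 q + N1 (N1 q) == 0.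
Proof. move: q; bf1. Qed.
Lemma o12 : o1 + o1 != 0.
Proof. by []. Qed.

Lemma Q1card : #|{: Q1}| = 8%N.
Proof. by rewrite /Q1 /prodZ card_prod !card_ord. Qed.

Lemma Q1_Q2 : #|Q2 pQ1| = 4%N.
Proof.
have -> : Q2 pQ1 = mk1 0 1 |: (mk1 0 3 |: (mk1 1 1 |: [set mk1 1 3])).
  apply/setP => q; rewrite !inE; move: q; bf1.
by rewrite !cardsU1 cards1 !inE.
Qed.

Lemma Q1_O4 : #|O4 Q1| = 4%N.
Proof.
have -> : O4 Q1 = mk1 0 1 |: (mk1 0 3 |: (mk1 1 1 |: [set mk1 1 3])).
  apply/setP => q; rewrite !inE; move: q; bf1.
by rewrite !cardsU1 cards1 !inE.
Qed.

Section Odd.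
Variable n : nat.
Definition f1 (x : prodZ Q1 (UU n)) : Gm (1 + (n + n)) :=
  (row_mx (const_mx x.1.1) (row_mx x.2.1 x.2.2), x.1.2).
Definition g1 (y : Gm (1 + (n + n))) : prodZ Q1 (UU n) :=
  ((lsubmx y.1 0 0, y.2), (lsubmx (rsubmx y.1), rsubmx (rsubmx y.1))).

Lemma f1D x y : f1 (x + y) = f1 x + f1 y.
Proof.
case: x y => [[b k] [u1 u2]] [[b' k'] [u1' u2']].
rewrite /f1 /=; congr (_, _).
rewrite !add_row_mx; congr (row_mx _ _).
by apply/matrixP => i j; rewrite !mxE.
Qed.

Lemma f1K : cancel f1 g1.
Proof.
case=> [[b k] [u1 u2]]; rewrite /f1 /g1 /= !row_mxKr !row_mxKl.
by rewrite mxE.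
Qed.

Lemma g1K : cancel g1 f1.
Proof.
case=> [v k]; rewrite /f1 /g1 /= hsubmxK.
have -> : const_mx (lsubmx v 0 0) = lsubmx v.
  by apply/matrixP => i j; rewrite !ord1 mxE.
by rewrite hsubmxK.
Qed.
End Odd.

Lemma pow4_mod3 n : (4 ^ n %% 3 = 1)%N.
Proof. by rewrite -modnXm /= exp1n. Qed.

Lemma odd_case n s : (3 * s < 4 ^ n)%N ->
  zero_sum_partition (~: [set 0] : {set Gm (1 + (n + n))})
    (nseq (2 * 4 ^ n - 3 * s) 2%N ++ nseq ((4 * 4 ^ n - 1 + 6 * s) %/ 3) 3%N).
Proof.
move=> hs.
have wz : @wU n 0 = 0 by rewrite /wU /= addr0.
have wfp : forall u : UU n, u != 0 -> wU u != u.
  by move=> u u0; apply/eqP => /wUfix; apply/eqP.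
have hs' : (3 * s < #|{: UU n}|)%N by rewrite card_UU.
have [Gam [G0 Gw cG]] := @gamma_exists _ (@wU n) 0 (@wU3 n) wz wfp s hs'.
apply: (@construction_zsp Q1 (UU n) (@UU2 n) (@wU n) (@wUD n) (@wU3 n) (@wUfix n)
   Gam G0 Gw (fun _ => N1) _ _ _ _ o1 o12 pQ1 pQ1S pQ1N pQ1C _ (@f1 n) (@g1 n)
   (@f1D n) (@f1K n) (@g1K n)).
- by [].
- by move=> u q _ /eqP h; apply/eqP; apply: N1invb.
- by move=> u q _ /eqP h; apply/eqP; apply: N13b.
- by move=> u q _ /eqP h; apply/eqP; apply: N1sumb.
- rewrite Q1_Q2 Q1_O4 card_UU cG.
  have := pow4_mod3 n; lia.
- rewrite Q1card card_UU.
  have := pow4_mod3 n; lia.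
Qed.

Definition Q3 := prodZ (prodZ 'Z_2 'Z_2) 'Z_4.
Definition mk3 (a b c : nat) : Q3 := ((inZp a, inZp b), inZp c).
Definition pQ3 (q : Q3) : Q3 :=
  match (val q.1.1, val q.1.2, val q.2) with
  | (1%N, 0%N, 0%N) => mk3 0 0 2 | (0%N, 0%N, 2%N) => mk3 1 0 2 | (1%N, 0%N, 2%N) => mk3 1 0 0
  | (0%N, 0%N, 1%N) => mk3 0 1 1 | (0%N, 1%N, 1%N) => mk3 0 1 2 | (0%N, 1%N, 2%N) => mk3 0 0 1
  | (1%N, 0%N, 3%N) => mk3 0 1 3 | (0%N, 1%N, 3%N) => mk3 1 1 2 | (1%N, 1%N, 2%N) => mk3 1 0 3
  | (1%N, 0%N, 1%N) => mk3 1 1 3 | (1%N, 1%N, 3%N) => mk3 0 1 0 | (0%N, 1%N, 0%N) => mk3 1 0 1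
  | (1%N, 1%N, 1%N) => mk3 0 0 3 | (0%N, 0%N, 3%N) => mk3 1 1 0 | (1%N, 1%N, 0%N) => mk3 1 1 1
  | _ => q end.
Definition A1 (q : Q3) : Q3 :=
  let c0 := ((val q.2)./2)%N in let c1 := val q.1.1 in let c2 := val q.1.2 in
  mk3 (c0 + c2) c1 (2 * c2).
Definition A2 (q : Q3) : Q3 :=
  let c0 := ((val q.2)./2)%N in let c1 := val q.1.1 in let c2 := val q.1.2 in
  mk3 (c1 + c2) (c0 + c2) (2 * c1).
Definition A4 (q : Q3) : Q3 :=
  let c0 := ((val q.2)./2)%N in let c1 := val q.1.1 in let c2 := val q.1.2 in
  mk3 (c0 + c1) (c0 + c1 + c2) (2 * (c1 + c2)).
Definition nqr (r : nat) (q : Q3) : Q3 :=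
  if r == 0%N then A1 q else if r == 1%N then A2 q else A4 q.
Definition o3 : Q3 := mk3 0 0 1.

Ltac bf3 := case=> [[[[|[|?]] ?] [[|[|?]] ?]] [[|[|[|[|?]]]] ?]] //.

Lemma pQ3S q : q != 0 -> pQ3 q != 0.
Proof. move: q; bf3. Qed.
Lemma pQ3N q : q != 0 -> pQ3 q != q.
Proof. move: q; bf3. Qed.
Lemma pQ3Cb q : q != 0 ->
  ((pQ3 (pQ3 q) == q) && (q + pQ3 q == 0)) ||
  [&& pQ3 (pQ3 (pQ3 q)) == q, pQ3 (pQ3 q) != q & q + pQ3 q + pQ3 (pQ3 q) == 0].
Proof. move: q; bf3. Qed.
Lemma pQ3C q : q != 0 ->
    (pQ3 (pQ3 q) = q /\ q + pQ3 q = 0) \/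
    (pQ3 (pQ3 (pQ3 q)) = q /\ pQ3 (pQ3 q) != q /\ q + pQ3 q + pQ3 (pQ3 q) = 0).
Proof.
move/pQ3Cb => /orP [/andP [/eqP -> /eqP ->]|/and3P [/eqP -> -> /eqP ->]]; by [left|right].
Qed.
Lemma Ainvb q : q + q == 0 ->
  [&& A1 q + A1 q == 0, A2 q + A2 q == 0 & A4 q + A4 q == 0].
Proof. move: q; bf3. Qed.
Lemma A3b q : q + q == 0 ->
  [&& A4 (A2 (A1 q)) == q, A1 (A4 (A2 q)) == q & A2 (A1 (A4 q)) == q].
Proof. move: q; bf3. Qed.
Lemma Asumb q : q + q == 0 ->
  [&& q + A1 q + A2 (A1 q) == 0, q + A2 q + A4 (A2 q) == 0 & q + A4 q + A1 (A4 q) == 0].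
Proof. move: q; bf3. Qed.
Lemma A0b : [&& A1 0 == 0, A2 0 == 0 & A4 0 == 0].
Proof. by []. Qed.
Lemma o32 : o3 + o3 != 0.
Proof. by []. Qed.

Lemma Q3card : #|{: Q3}| = 16%N.
Proof. by rewrite /Q3 /prodZ !card_prod !card_ord. Qed.

Lemma Q3_Q2 : #|Q2 pQ3| = 0%N.
Proof.
have -> : Q2 pQ3 = set0.
  apply/setP => q; rewrite !inE; move: q; bf3.
by rewrite cards0.
Qed.

Lemma Q3_O4 : #|O4 Q3| = 8%N.
Proof.
have -> : O4 Q3 = mk3 0 0 1 |: (mk3 0 0 3 |: (mk3 1 0 1 |: (mk3 1 0 3 |:
   (mk3 0 1 1 |: (mk3 0 1 3 |: (mk3 1 1 1 |: [set mk3 1 1 3])))))).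
  apply/setP => q; rewrite !inE; move: q; bf3.
by rewrite !cardsU1 cards1 !inE.
Qed.

Section Even.
Variable n : nat.
Definition f3 (x : prodZ Q3 (UU n)) : Gm (2 + (n + n)) :=
  (row_mx (\row_(j < 2) (if j == ord0 then x.1.1.1 else x.1.1.2)) (row_mx x.2.1 x.2.2), x.1.2).
Definition g3 (y : Gm (2 + (n + n))) : prodZ Q3 (UU n) :=
  (((lsubmx y.1 0 ord0, lsubmx y.1 0 ord_max), y.2),
   (lsubmx (rsubmx y.1), rsubmx (rsubmx y.1))).

Lemma f3D x y : f3 (x + y) = f3 x + f3 y.
Proof.
case: x y => [[[b0 b1] k] [u1 u2]] [[[b0' b1'] k'] [u1' u2']].
rewrite /f3 /=; congr (_, _).
rewrite !add_row_mx; congr (row_mx _ _).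
by apply/matrixP => i j; rewrite !mxE; case: ifP.
Qed.

Lemma f3K : cancel f3 g3.
Proof.
case=> [[[b0 b1] k] [u1 u2]]; rewrite /f3 /g3 /= !row_mxKr !row_mxKl.
by rewrite !mxE.
Qed.

Lemma g3K : cancel g3 f3.
Proof.
case=> [v k]; rewrite /f3 /g3 /= hsubmxK.
have -> : \row_(j < 2) (if j == ord0 then lsubmx v 0 ord0 else lsubmx v 0 ord_max) = lsubmx v.
  apply/matrixP => i j; rewrite !ord1 mxE.
  by case: j => [[|[|?]] ?] //=; congr (lsubmx v _ _); apply/val_inj.
by rewrite hsubmxK.
Qed.
End Even.

Lemma even_case n s : (3 * s < 4 ^ n)%N ->
  zero_sum_partition (~: [set 0] : {set Gm (2 + (n + n))})
    (nseq (4 * 4 ^ n - 4 - 3 * s) 2%N ++ nseq ((8 * 4 ^ n + 7 + 6 * s) %/ 3) 3%N).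
Proof.
move=> hs.
have wz : @wU n 0 = 0 by rewrite /wU /= addr0.
have wfp : forall u : UU n, u != 0 -> wU u != u.
  by move=> u u0; apply/eqP => /wUfix; apply/eqP.
have hs' : (3 * s < #|{: UU n}|)%N by rewrite card_UU.
have [Gam [G0 Gw cG]] := @gamma_exists _ (@wU n) 0 (@wU3 n) wz wfp s hs'.
have [c hc] := @label_exists _ (@wU n) 0 (@wU3 n) wz wfp.
have wN0 : forall u : UU n, u != 0 -> wU u != 0.
  by move=> u u0; apply: contraNneq u0 => e; rewrite -(wU3 u) e !wz.
apply: (@construction_zsp Q3 (UU n) (@UU2 n) (@wU n) (@wUD n) (@wU3 n) (@wUfix n)
   Gam G0 Gw (fun u => nqr (c u)) _ _ _ _ o3 o32 pQ3 pQ3S pQ3N pQ3C _ (@f3 n) (@g3 n)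
   (@f3D n) (@f3K n) (@g3K n)).
- move=> u; case/and3P: A0b => /eqP e1 /eqP e2 /eqP e3.
  by rewrite /nqr; do !case: ifP => _.
- move=> u q u0 /eqP h; apply/eqP; case/and3P: (Ainvb h) => e1 e2 e3.
  by rewrite /nqr; do !case: ifP => _.
- move=> u q u0 /eqP h; apply/eqP; case/and3P: (A3b h) => e1 e2 e3.
  case: (hc u) => lt /(_ u0) e; case: (hc (wU u)) => _ /(_ (wN0 _ u0)) e'.
  rewrite e' e /nqr; move: lt; case: (c u) => [|[|[|?]]] //= _.
- move=> u q u0 /eqP h; apply/eqP; case/and3P: (Asumb h) => e1 e2 e3.
  case: (hc u) => lt /(_ u0) e.
  rewrite e /nqr; move: lt; case: (c u) => [|[|[|?]]] //= _.
- rewrite Q3_Q2 Q3_O4 card_UU cG.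
  have := pow4_mod3 n; lia.
- rewrite Q3card card_UU.
  have := pow4_mod3 n; lia.
Qed.

Lemma card_Gm m : #|{: Gm m}| = (2 ^ m * 4)%N.
Proof. by rewrite /Gm card_prod card_mx !card_ord mul1n. Qed.

Lemma card_invols m : #|invols (Gm m)| = (2 ^ m * 2 - 1)%N.
Proof.
pose S4 : {set 'Z_4} := inZp 2 |: [set inZp 0].
have e : invols (Gm m) = [set x : Gm m | x.2 \in S4] :\ (0 : Gm m).
  apply/setP => [[v k]]; rewrite !inE /=.
  have -> : ((v, k) + (v, k) == 0 :> Gm m) = (k + k == 0).
    by rewrite [_ + _](_ : _ = (v + v, k + k)) // rV2 xpair_eqE eqxx.
  have -> : ((v, k) == 0 :> Gm m) = (v == 0) && (k == 0) by [].

  by move: k; case=> [[|[|[|[|?]]]] ?].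
rewrite e.
have c : #|[set x : Gm m | x.2 \in S4]| = (2 ^ m * 2)%N.
  rewrite -[RHS](_ : #|setX [set: 'rV['Z_2]_m] S4| = _).
    by apply: eq_card => x; rewrite !inE.
  by rewrite cardsX cardsT card_mx card_ord mul1n /S4 cardsU1 cards1 inE.
have := cardsD1 (0 : Gm m) [set x : Gm m | x.2 \in S4].
rewrite c inE /= /S4 !inE /=.
by move=> ->; rewrite addKn.
Qed.

Lemma fG_Gm m : fG (Gm m) = (2 ^ m)%N.
Proof.
rewrite /fG card_Gm card_invols.
have h : (0 < 2 ^ m)%N by rewrite expn_gt0.
rewrite (_ : 2 ^ m * 4 - (2 ^ m * 2 - 1) - 1 = 2 * 2 ^ m)%N; last by lia.
by rewrite mulKn.
Qed.

Local Close Scope ring_scope.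

Theorem lemma6p33 :
  exists m0 : nat, forall m : nat, (m0 <= m)%N ->
    forall t : nat,
      (3 <= t)%N -> (1000 * t <= fG (Gm m))%N ->
      ((#|invols (Gm m)| + 2 * t) %% 3 = 0)%N ->
      zero_sum_partition (~: [set (0 : Gm m)%R])
        (nseq (fG (Gm m) - t) 2%N ++ nseq ((#|invols (Gm m)| + 2 * t) %/ 3) 3%N).
Proof.
exists 0%N => m _ t t3.
rewrite card_invols fG_Gm => ht hmod.
have [n [hm|hm]] : exists n, m = (1 + (n + n))%N \/ m = (2 + (n + n))%N.
  have := odd_double_half m; rewrite -addnn.
  move: (m./2) => k; case: (odd m) => /= e.
    by exists k; left; lia.
  case: k e => [|k] e.
    by move: ht; rewrite -e /= => ht; lia.
  by exists k; right; lia.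
- subst m.
  have p4 := pow4_mod3 n.
  have e2 : (2 ^ (1 + (n + n)) = 2 * 4 ^ n)%N.
    by rewrite !expnD (_ : 4 = 2 * 2)%N // expnMn.
  rewrite e2 in ht hmod *.
  have [s hs] : exists s, t = (3 * s)%N.
    exists (t %/ 3)%N; lia.
  subst t.
  have := @odd_case n s.
  have -> : (2 * 4 ^ n * 2 - 1 + 2 * (3 * s) = 4 * 4 ^ n - 1 + 6 * s)%N by lia.
  apply; lia.
- subst m.
  have p4 := pow4_mod3 n.
  have e2 : (2 ^ (2 + (n + n)) = 4 * 4 ^ n)%N.
    by rewrite !expnD (_ : 4 = 2 * 2)%N // expnMn.
  rewrite e2 in ht hmod *.
  have [s hs] : exists s, t = (3 * s + 4)%N.
    exists ((t - 4) %/ 3)%N; lia.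
  subst t.
  have := @even_case n s.
  have -> : (4 * 4 ^ n * 2 - 1 + 2 * (3 * s + 4) = 8 * 4 ^ n + 7 + 6 * s)%N by lia.
  have -> : (4 * 4 ^ n - (3 * s + 4) = 4 * 4 ^ n - 4 - 3 * s)%N by lia.
  apply; lia.
Qed.
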